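(* Let $R$ and $S$ be commutative rings with identity, $f:R\to S$ a ring homomorphism, and $J$ a nonzero proper ideal of $S$. Suppose $R$ is compactly packed. Then for any family $\{\mathfrak{p}_\alpha\}_{\alpha\in\Lambda}$ of prime ideals of $R$, the subset $\{\mathfrak{p}_\alpha^{\prime_f}\}_{\alpha\in\Lambda}$ of $\operatorname{Spec}(R\bowtie^f J)$ is compactly packed.
   Context: $R\bowtie^f J:=\{(r,f(r)+j)\mid r\in R,\ j\in J\}$, a subring of $R\times S$. For a prime ideal $\mathfrak{p}$ of $R$, $\mathfrak{p}^{\prime_f}:=\{(p,f(p)+j)\mid p\in\mathfrak{p},\ j\in J\}$, which is a prime ideal of $R\bowtie^f J$. For a commutative ring $A$, a subset $X\subseteq\operatorname{Spec}(A)$ is compactly packed if whenever an ideal $I$ of $A$ is contained in the union of a family $\{\mathfrak{p}_i\}_i$ of elements of $X$, then $I\subseteq\mathfrak{p}_i$ for some $i$; $A$ is compactly packed if $\operatorname{Spec}(A)$ is compactly packed. *)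

(* Defs.v *)
From HB Require Import structures.
From mathcomp Require Import all_boot all_order all_algebra.
Set Implicit Arguments. Unset Strict Implicit. Unset Printing Implicit Defensive.
Import GRing.Theory.
Local Open Scope ring_scope.

Definition is_ideal (R : comPzRingType) (I : R -> Prop) : Prop :=
  [/\ I 0, (forall x y, I x -> I y -> I (x + y)) & (forall r x, I x -> I (r * x))].

Definition is_prime_ideal (R : comPzRingType) (P : R -> Prop) : Prop :=
  [/\ is_ideal P, ~ P 1 & (forall x y, P (x * y) -> P x \/ P y)].

(* Amalgamation R ⋈^f J = {(r, f r + j) | r in R, j in J}, as a subset of R x S
   (a subring of the product ring, with componentwise operations). *)
Definition amalg (R S : comPzRingType) (f : {rmorphism R -> S}) (J : S -> Prop)
  : R * S -> Prop :=
  fun x => exists r j, J j /\ x = (r, f r + j).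

Definition pmul (R S : comPzRingType) (x y : R * S) : R * S := (x.1 * y.1, x.2 * y.2).
Definition padd (R S : comPzRingType) (x y : R * S) : R * S := (x.1 + y.1, x.2 + y.2).

Definition is_amalg_ideal (R S : comPzRingType) (f : {rmorphism R -> S})
  (J : S -> Prop) (I : R * S -> Prop) : Prop :=
  [/\ (forall x, I x -> amalg f J x), I (0, 0),
      (forall x y, I x -> I y -> I (padd x y))
    & (forall a x, amalg f J a -> I x -> I (pmul a x))].

Definition prime_lift (R S : comPzRingType) (f : {rmorphism R -> S})
  (J : S -> Prop) (P : R -> Prop) : R * S -> Prop :=
  fun x => exists p j, [/\ P p, J j & x = (p, f p + j)].

Definition compactly_packed_set (T : Type) (isIdeal : (T -> Prop) -> Prop)
  (X : (T -> Prop) -> Prop) : Prop :=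
  forall (I : T -> Prop), isIdeal I ->
  forall (Idx : Type) (q : Idx -> T -> Prop),
    (forall i, X (q i)) ->
    (forall x, I x -> exists i, q i x) ->
    exists i, forall x, I x -> q i x.

Definition compactly_packed_ring (R : comPzRingType) : Prop :=
  compactly_packed_set (@is_ideal R) (@is_prime_ideal R).

(* Main.v *)
Require Import Defs.
From mathcomp Require Import all_boot all_order all_algebra.
Local Open Scope ring_scope.
Import GRing.Theory.

Theorem proposition4p3 (R S : comPzRingType) (f : {rmorphism R -> S})
  (J : S -> Prop) (HJ : is_ideal J) (HJnz : exists j, J j /\ j <> 0)
  (HJprop : ~ J 1) (HR : compactly_packed_ring R)
  (Lambda : Type) (p : Lambda -> R -> Prop)
  (Hp : forall a, is_prime_ideal (p a)) :
  compactly_packed_set (is_amalg_ideal f J)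
    (fun Q => exists a, forall x, Q x <-> prime_lift f J (p a) x).
Proof.
move=> I [Iam I0 Iadd Imul] Idx q Hq Hcov.
pose I1 := fun r : R => exists s, I (r, s).
have HI1 : is_ideal I1.
  split; first by exists 0.
  - move=> x y [s1 H1] [s2 H2]; exists (s1 + s2).
    exact: (Iadd _ _ H1 H2).
  - move=> r x [s H]; exists (f r * s).
    have Ha : amalg f J (r, f r).
      exists r, 0; split; first by case: HJ.
      by rewrite addr0.
    exact: (Imul _ _ Ha H).
pose Idx' := {ia : Idx * Lambda | forall x, q ia.1 x <-> prime_lift f J (p ia.2) x}.
pose q' := fun ia : Idx' => p (sval ia).2.
have Hcov' : forall r, I1 r -> exists ia : Idx', q' ia r.
move=> r [s Hrs].
  have [i Hi] := Hcov _ Hrs.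
  have [a Ha] := Hq i.
  have [pp [j [Hpp Jj E]]] := (Ha _).1 Hi.
  case: E => -> _.
  by exists (exist _ (i, a) Ha).
have [ia Hsub] := HR I1 HI1 Idx' q' (fun ia => Hp _) Hcov'.
  case: ia Hsub => [[i a] Hia] /= Hsub.
  exists i => x Ix.
  apply/Hia; have [r [j [Jj Ex]]] := Iam x Ix.
  subst x; exists r, j; split => //.
  apply: Hsub; by exists (f r + j).
Qed.
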